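(* Let $P=\{p_1,\dots,p_n\}$ be weighted points in $\mathbb{R}^2$ with total weight $1$, let $S=\{s_1,\dots,s_m\}$ be line segments in $\mathbb{R}^2$ of total length $1$, let $0<\delta$, and let $Q$ be the set of subsegments obtained from $S$ by the subdivision procedure described in the context. Let $G$ be the complete bipartite graph on $P\cup Q$ in which each $p\in P$ has supply $\|p\|$, each $q\in Q$ has demand equal to its length $\|q\|$, and the cost of edge $(p,q)$ is the Euclidean distance from $p$ to the closest point of $q$. Then the earth mover's distance between $P$ and $Q$ is at least the cost $\|\mathcal{W}\|$ of a minimum cost flow $\mathcal{W}$ in $G$ (a flow sending all supply to satisfy all demands).
   Context: Mass of each segment equals its length and is spread uniformly over it with density one. A transport plan from $P$ to a set of segments assigns to each point $p$ and each point $x$ of the segments a density $\tau_p(x)\in[0,1]$ such that each point $p$ sends total mass $\|p\|$ and each point $x$ of the segments receives total density $1$; its cost is $\sum_p\int\tau_p(x)\,\|p-x\|_2\,dx$; the earth mover's distance is the infimum of costs. Subdivision procedure: repeatedly, for each current subsegment $s'$: if there is a point of $P$ such that all of $s'$ lies within Euclidean distance $\delta/(nm)$ of it, leave $s'$ as is; otherwise, if there is a point $p\in P$ for which the ratio between the largest and smallest distance from $p$ to points of $s'$ exceeds $1+\delta$, cut $s'$ into two halves. The final set of subsegments is $Q$. *)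

(* Defs.v *)
From HB Require Import structures.
From mathcomp Require Import all_boot all_order all_algebra.
From mathcomp Require Import all_classical all_reals all_analysis.
Set Implicit Arguments. Unset Strict Implicit. Unset Printing Implicit Defensive.
Import Order.TTheory GRing.Theory Num.Theory.
Local Open Scope classical_set_scope.
Local Open Scope ring_scope.

Section Defs.
Variable R : realType.

Definition pt := (R * R)%type.
Definition seg := (pt * pt)%type.

Definition dist (x y : pt) : R :=
  Num.sqrt ((x.1 - y.1) ^+ 2 + (x.2 - y.2) ^+ 2).

Definition segpt (s : seg) (t : R) : pt :=
  (s.1.1 + t * (s.2.1 - s.1.1), s.1.2 + t * (s.2.2 - s.1.2)).

Definition seglen (s : seg) : R := dist s.1 s.2.

Definition dists (p : pt) (s : seg) : set R :=
  [set dist p (segpt s t) | t in `[(0:R), 1]%classic].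

Definition maxdist (p : pt) (s : seg) : R := sup (dists p s).
Definition mindist (p : pt) (s : seg) : R := inf (dists p s).

Definition half1 (s : seg) : seg :=
  (s.1, ((s.1.1 + s.2.1) / 2, (s.1.2 + s.2.2) / 2)).
Definition half2 (s : seg) : seg :=
  (((s.1.1 + s.2.1) / 2, (s.1.2 + s.2.2) / 2), s.2).

Definition near_point n (pos : 'I_n -> pt) (m : nat) (delta : R) (s : seg) :=
  exists i : 'I_n, forall t, t \in `[0, 1] ->
    dist (pos i) (segpt s t) <= delta / (n * m)%:R.

(* second test: ratio largest/smallest distance from some p exceeds 1+delta
   (stated multiplicatively: max > (1 + delta) * min) *)
Definition bad_ratio n (pos : 'I_n -> pt) (delta : R) (s : seg) :=
  exists i : 'I_n, maxdist (pos i) s > (1 + delta) * mindist (pos i) s.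

(* subdiv s Q : running the procedure from the single subsegment s
   terminates with the list Q of final subsegments *)
Inductive subdiv n (pos : 'I_n -> pt) (m : nat) (delta : R) : seg -> seq seg -> Prop :=
| subdiv_keep_near s : near_point pos m delta s -> subdiv pos m delta s [:: s]
| subdiv_keep_ok s : ~ near_point pos m delta s -> ~ bad_ratio pos delta s ->
    subdiv pos m delta s [:: s]
| subdiv_cut s Q1 Q2 : ~ near_point pos m delta s -> bad_ratio pos delta s ->
    subdiv pos m delta (half1 s) Q1 -> subdiv pos m delta (half2 s) Q2 ->
    subdiv pos m delta s (Q1 ++ Q2).

Definition subdivision n (pos : 'I_n -> pt) m (S : 'I_m -> seg) (delta : R)
    (Q : seq seg) :=
  exists Qs : 'I_m -> seq seg,
    (forall j, subdiv pos m delta (S j) (Qs j)) /\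
    Q = flatten [seq Qs j | j <- enum 'I_m].

Definition segQ (Q : seq seg) (j : 'I_(size Q)) : seg := nth (0, 0, (0, 0)) Q j.

(* tau i j t = density sent from point i to the point segpt (Q_j) t;
   dx = seglen Q_j * dt on segment j *)
Definition is_plan n (w : 'I_n -> R) (Q : seq seg)
    (tau : 'I_n -> 'I_(size Q) -> R -> R) :=
  [/\ (forall i j, measurable_fun `[(0:R), 1]%classic (tau i j)),
      (forall i j t, t \in `[0, 1] -> 0 <= tau i j t <= 1),
      (forall j t, t \in `[0, 1] -> \sum_i tau i j t = 1) &
      (forall i, \sum_j seglen (segQ j) *
           Rintegral lebesgue_measure `[(0:R), 1]%classic (tau i j) = w i)].

Definition plan_cost n (pos : 'I_n -> pt) (Q : seq seg)
    (tau : 'I_n -> 'I_(size Q) -> R -> R) : R :=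
  \sum_i \sum_j seglen (segQ j) *
    Rintegral lebesgue_measure `[(0:R), 1]%classic
      (fun t => tau i j t * dist (pos i) (segpt (segQ j) t)).

Definition emd n (pos : 'I_n -> pt) (w : 'I_n -> R) (Q : seq seg) : R :=
  inf [set c | exists tau : 'I_n -> 'I_(size Q) -> R -> R,
    is_plan w tau /\ c = plan_cost pos tau].

Definition is_flow n (w : 'I_n -> R) (Q : seq seg) (f : 'I_n -> 'I_(size Q) -> R) :=
  [/\ (forall i j, 0 <= f i j),
      (forall i, \sum_j f i j = w i) &
      (forall j, \sum_i f i j = seglen (segQ j))].

Definition flow_cost n (pos : 'I_n -> pt) (Q : seq seg)
    (f : 'I_n -> 'I_(size Q) -> R) : R :=
  \sum_i \sum_j f i j * mindist (pos i) (segQ j).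

Definition is_min_flow n (pos : 'I_n -> pt) (w : 'I_n -> R) (Q : seq seg)
    (f : 'I_n -> 'I_(size Q) -> R) :=
  is_flow w f /\ forall g : 'I_n -> 'I_(size Q) -> R, is_flow w g -> flow_cost pos f <= flow_cost pos g.

End Defs.

(* Main.v *)
From HB Require Import structures.
From mathcomp Require Import all_boot all_order all_algebra.
From mathcomp Require Import all_classical all_reals all_analysis.
From mathcomp Require Import ring lra.
Require Import Defs.
Import Order.TTheory GRing.Theory Num.Theory.
Import numFieldNormedType.Exports.
Set Implicit Arguments. Unset Strict Implicit. Unset Printing Implicit Defensive.
Local Open Scope classical_set_scope.
Local Open Scope ring_scope.
Lemma cont_sum (T : topologicalType) (R : realType) (I : Type) (s : seq I)
  (F : I -> T -> R) : (forall i, continuous (F i)) ->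
  continuous (fun x => \sum_(i <- s) F i x).
Proof.
move=> HF; elim: s => [|a s IH].
  have -> : (fun x => \sum_(i <- [::]) F i x) = (fun=> 0 : R).
    by apply: funext => x; rewrite big_nil.
  exact: cst_continuous.
have -> : (fun x => \sum_(i <- a :: s) F i x) = F a + (fun x => \sum_(i <- s) F i x).
  by apply: funext => x; rewrite big_cons.
by move=> x; apply: continuousD; [exact: HF| exact: IH].
Qed.

Definition gflow (R : realType) n k (w : 'I_n -> R) (d : 'I_k -> R)
  (f : 'I_n -> 'I_k -> R) :=
  [/\ (forall i j, 0 <= f i j), (forall i, \sum_j f i j = w i) &
      (forall j, \sum_i f i j = d j)].

Lemma min_flow_exists (R : realType) n k (w : 'I_n -> R) (d : 'I_k -> R)
  (c : 'I_n -> 'I_k -> R) :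
  (forall i, w i <= 1) -> (exists f0, gflow w d f0) ->
  exists W, gflow w d W /\ forall h, gflow w d h ->
    \sum_i \sum_j W i j * c i j <= \sum_i \sum_j h i j * c i j.
Proof.
move=> w1 [f0 Hf0].
pose g (v : 'rV[R]_(n * k)) := fun i j => v ord0 (mxvec_index i j).
have gK (h : 'I_n -> 'I_k -> R) : g (mxvec (\matrix_(i, j) h i j)) = h.
  apply: funext => i; apply: funext => j.
  by rewrite /g -[ord0]/(0 : 'I_1) mxvecE mxE.
pose F := [set v | gflow w d (g v)].
have coordc (l : 'I_(n * k)) : continuous (fun v : 'rV[R]_(n * k) => v ord0 l).
  exact: coord_continuous.
have gc i j : continuous (fun v => g v i j) by exact: coordc.
pose C := fun (x : ('I_n * 'I_k + 'I_n) + 'I_k) =>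
  match x with
  | inl (inl p) => [set v | 0 <= g v p.1 p.2]
  | inl (inr i) => [set v | \sum_j g v i j = w i]
  | inr j => [set v | \sum_i g v i j = d j]
  end.
have FC : F = \bigcap_(x in setT) C x.
  apply/seteqP; split.
    move=> v [H1 H2 H3] [[p|i]|j] _ /=; [exact: H1|exact: H2|exact: H3].
  move=> v Hv; split.
  - by move=> i j; exact: (Hv (inl (inl (i, j)))).
  - by move=> i; exact: (Hv (inl (inr i))).
  - by move=> j; exact: (Hv (inr j)).
have Fclosed : closed F.
  rewrite FC; apply: closed_bigI => -[[p|i]|j] _ /=.
  - apply: (preimage_closed (f := fun v => g v p.1 p.2) (D := [set x : R | 0 <= x])).
      by move=> v _; apply: gc.
    exact: closed_ge.
  - apply: (preimage_closed (f := fun v => \sum_j g v i j) (D := [set x : R | x = w i])).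
      by move=> v _; apply: cont_sum => j; apply: gc.
    exact: closed_eq.
  - apply: (preimage_closed (f := fun v => \sum_i g v i j) (D := [set x : R | x = d j])).
      by move=> v _; apply: cont_sum => i; apply: gc.
    exact: closed_eq.
have Fcompact : compact F.
  apply: (subclosed_compact Fclosed
    (rV_compact (A := fun=> `[(0:R), 1]%classic) (fun=> @segment_compact R 0 1))).
  move=> v [H1 H2 H3] l /=.
  case: (mxvec_indexP l) => i j.
  rewrite in_itv /=; apply/andP; split; first exact: (H1 i j).
  apply: le_trans (w1 i); rewrite -(H2 i).
  rewrite (bigD1 j) //= -/(g v i j) lerDl.
  by apply: sumr_ge0 => j' _; apply: H1.
have F0 : F !=set0.
  by exists (mxvec (\matrix_(i, j) f0 i j)); rewrite /F /= gK.
pose cost := fun v => \sum_i \sum_j g v i j * c i j.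
have costc : continuous cost.
  apply: cont_sum => i; apply: cont_sum => j.
  move=> v; apply: continuousM; first exact: gc.
  exact: cst_continuous.
have [v0 v0F v0min] := compact_EVT_min F0 Fcompact (continuous_subspaceT costc).
exists (g v0); split; first by move: v0F; rewrite inE.
move=> h Hh.
have := v0min (mxvec (\matrix_(i, j) h i j)).
rewrite /cost gK; apply.
by rewrite inE /F /= gK.
Qed.
Section S.
Variable R : realType.
Implicit Types f g : R -> R.

Lemma cD f g : continuous f -> continuous g -> continuous (fun x => f x + g x).
Proof. by move=> hf hg x; apply: (continuousD (hf x) (hg x)). Qed.
Lemma cM f g : continuous f -> continuous g -> continuous (fun x => f x * g x).
Proof. by move=> hf hg x; apply: (continuousM (hf x) (hg x)). Qed.
Lemma cN f : continuous f -> continuous (fun x => - f x).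
Proof. by move=> hf x; apply: (continuousN (hf x)). Qed.
Lemma cC (c : R) : continuous (fun _ : R => c).
Proof. exact: cst_continuous. Qed.
Lemma cI : continuous (fun x : R => x).
Proof. by move=> x. Qed.

Lemma dist_cont (p : pt R) (s : seg R) : continuous (fun t => dist p (segpt s t)).
Proof.
rewrite /dist /segpt /=.
have h : continuous (fun t : R => (p.1 - (s.1.1 + t * (s.2.1 - s.1.1))) ^+ 2 +
   (p.2 - (s.1.2 + t * (s.2.2 - s.1.2))) ^+ 2).
  apply: cD; rewrite /GRing.exp /=; apply: cM; apply: cD; try apply: cC;
    apply: cN; apply: cD; try apply: cC; apply: cM; try apply: cC; apply: cI.
move=> t; apply: (continuous_comp (h t)); exact: sqrt_continuous.
Qed.

Definition I01 : set R := `[(0:R), 1]%classic.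

Lemma Iin (t : R) : I01 t -> t \in `[(0:R), 1].
Proof. by []. Qed.

Lemma mI : measurable (I01 : set (measurableTypeR R)).
Proof. exact: measurable_itv. Qed.

Lemma leb01 : lebesgue_measure I01 = 1%:E.
Proof. by rewrite /I01 lebesgue_measure_itv /= lte_fin ltr01 /= oppr0 adde0. Qed.

Lemma cont_meas f : continuous f ->
  measurable_fun (I01 : set (measurableTypeR R)) (f : measurableTypeR R -> R).
Proof.
move=> hf.
have h := (measurable_funS measurableT (@subsetT _ I01) (measurable_realfun.continuous_measurable_fun hf)).
exact: h.
Qed.

Lemma I01_proper : ProperFilter (globally I01).
Proof. apply: (@globally_properfilter _ _ 0); by rewrite /I01 /= in_itv /= lexx ler01. Qed.

Lemma bnd_ex f (M : R) : (forall t, I01 t -> `|f t| <= M) -> [bounded f x | x in I01].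
Proof.
move=> H; apply: (proj2 (@ex_bound _ R R^o f _ I01_proper)); exists M => t /= It; exact: H.
Qed.

Lemma cont_bnd f : continuous f -> [bounded f x | x in I01].
Proof.
move=> hf.
have cpt : compact [set f x | x in I01].
  apply: continuous_compact; first exact: continuous_subspaceT.
  exact: segment_compact.
have B := compact_bounded cpt.
have PF : ProperFilter (globally [set f x | x in I01]).
  apply: (@globally_properfilter _ _ (f 0)); exists 0 => //.
  by rewrite /I01 /= in_itv /= lexx ler01.
have [M HM] := (proj1 (@ex_bound _ R R^o id _ PF)) B.
apply: (bnd_ex (M := M)) => t It; apply: (HM (f t)); by exists t.
Qed.

Lemma int_of f (M : R) :
  measurable_fun (I01 : set (measurableTypeR R)) (f : measurableTypeR R -> R) -> (forall t, I01 t -> `|f t| <= M) ->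
  lebesgue_measure.-integrable I01 (EFin \o f).
Proof.
move=> mf hb; apply: measurable_bounded_integrable => //.
- exact: mI.
- by rewrite -[X in (X < _)%E]/(lebesgue_measure I01) leb01 ltry.
- exact: bnd_ex hb.
Qed.

Lemma intM f h : lebesgue_measure.-integrable I01 (EFin \o f) -> continuous h ->
  lebesgue_measure.-integrable I01 (EFin \o (fun t => f t * h t)).
Proof.
move=> fi hc.
have := integrableMl mI fi (cont_meas hc) (cont_bnd hc).
apply: eq_integrable; first exact: mI.
by move=> t _ /=; rewrite EFinM.
Qed.

Lemma Rint_sum (J : Type) (s : seq J) (F : J -> R -> R) :
  (forall j, lebesgue_measure.-integrable I01 (EFin \o F j)) ->
  lebesgue_measure.-integrable I01 (EFin \o (fun t => \sum_(j <- s) F j t)) /\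
  Rintegral lebesgue_measure I01 (fun t => \sum_(j <- s) F j t) =
  \sum_(j <- s) Rintegral lebesgue_measure I01 (F j).
Proof.
move=> HF; elim: s => [|a s [IHi IHe]].
  have e : (fun t => \sum_(j <- [::]) F j t) = (fun=> 0).
    by apply: funext => t; rewrite big_nil.
  rewrite e big_nil; split.
    apply: (int_of (M:=0)) => [|t _]; [exact: measurable_cst | by rewrite normr0].
  by rewrite Rintegral_cst ?mul0r //; exact: mI.
have e : (fun t => \sum_(j <- a :: s) F j t) = (fun t => F a t + \sum_(j <- s) F j t).
  by apply: funext => t; rewrite big_cons.
rewrite e big_cons; split.
  have := integrableD mI (HF a) IHi.
  apply: eq_integrable; first exact: mI.
  by move=> t _ /=; rewrite EFinD.
by rewrite RintegralD //; [rewrite IHe | exact: mI].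
Qed.

End S.
Lemma half_len (R : realType) (s : seg R) :
  seglen (half1 s) = seglen s / 2 /\ seglen (half2 s) = seglen s / 2.
Proof.
rewrite /seglen /dist /half1 /half2 /=.
have key : forall a : R, Num.sqrt ((2^-1) ^+ 2 * a) = Num.sqrt a / 2.
  move=> a; rewrite sqrtrM ?sqr_ge0 // sqrtr_sqr ger0_norm ?invr_ge0 ?ler0n //.
  by rewrite mulrC.
split; rewrite -key; congr Num.sqrt; by field.
Qed.

Lemma subdiv_len (R : realType) n (pos : 'I_n -> pt R) m delta s Qs :
  subdiv pos m delta s Qs -> \sum_(q <- Qs) seglen q = seglen s.
Proof.
elim=> [s' _|s' _ _|s' Q1 Q2 _ _ _ IH1 _ IH2]; rewrite ?big_seq1 //.
rewrite big_cat /= IH1 IH2; have [-> ->] := half_len s'.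
by rewrite -splitr.
Qed.

Lemma sumQ (R : realType) n (pos : 'I_n -> pt R) m (S : 'I_m -> seg R) delta Q :
  subdivision pos S delta Q ->
  \sum_(j < size Q) seglen (segQ j) = \sum_j seglen (S j).
Proof.
move=> [Qs [HQs HQ]].
have -> : \sum_(j < size Q) seglen (segQ j) = \sum_(q <- Q) seglen q.
  by rewrite (big_nth (0, 0, (0, 0))) big_mkord.
rewrite HQ big_flatten /= big_map big_enum /=.
by apply: eq_bigr => j _; apply: subdiv_len (HQs j).
Qed.

Theorem lemma1 (R : realType) (n m : nat) (pos : 'I_n -> pt R) (w : 'I_n -> R)
  (S : 'I_m -> seg R) (delta : R) (Q : seq (seg R)) :
  (forall i, 0 < w i) -> \sum_i w i = 1 ->
  \sum_j seglen (S j) = 1 ->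
  0 < delta ->
  subdivision pos S delta Q ->
  exists W : 'I_n -> 'I_(size Q) -> R,
    is_min_flow pos w W /\ flow_cost pos W <= emd pos w Q.
Proof.
move=> wpos wsum Ssum dpos HQ.
have Qsum : \sum_(j < size Q) seglen (segQ j) = 1 by rewrite (sumQ HQ).
have w1 i : w i <= 1.
  rewrite -wsum (bigD1 i) //= lerDl; apply: sumr_ge0 => k _; exact: ltW.
have seg0 (q : seg R) : 0 <= seglen q by exact: sqrtr_ge0.
have ex0 : exists f0, gflow w (fun j : 'I_(size Q) => seglen (segQ j)) f0.
  exists (fun i (j : 'I_(size Q)) => w i * seglen (segQ j)); split.
  - by move=> i j; apply: mulr_ge0; [exact: ltW | exact: seg0].
  - by move=> i; rewrite -mulr_sumr Qsum mulr1.
  - by move=> j; rewrite -mulr_suml wsum mul1r.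
have [W [HW Wmin]] := min_flow_exists
  (fun i (j : 'I_(size Q)) => mindist (pos i) (segQ j)) w1 ex0.
exists W; split; first by split=> // g Hg; exact: Wmin.
have mind (p : pt R) (q : seg R) t : I01 t -> mindist p q <= dist p (segpt q t).
  move=> It; apply: ge_inf; last by exists t.
  by exists 0 => y [t' _ <-]; exact: sqrtr_ge0.
apply: lb_le_inf.
  exists (plan_cost pos (fun i (j : 'I_(size Q)) (t : R) => w i)).
  exists (fun i (j : 'I_(size Q)) (t : R) => w i); split => //; split.
  - by move=> i j; exact: measurable_cst.
  - by move=> i j t _; rewrite (ltW (wpos i)) w1.
  - by move=> j t _.
  - move=> i.
    under eq_bigr => j _ do rewrite Rintegral_cst ?mI //.
    by rewrite -[X in fine X]/(lebesgue_measure (@I01 R)) leb01 /= mulr1 -mulr_suml Qsum mul1r.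
move=> c [tau [[Hm H01 Hsum Hrow] ->]].
have tauI (i : 'I_n) (j : 'I_(size Q)) : lebesgue_measure.-integrable (@I01 R) (EFin \o tau i j).
  apply: (int_of (M := 1)); first exact: (Hm i j).
  move=> t It; have /andP[t0 t1] := H01 i j t (Iin It).
  by rewrite ger0_norm.
pose fl := fun i (j : 'I_(size Q)) =>
  seglen (segQ j) * Rintegral lebesgue_measure (@I01 R) (tau i j).
have Hfl : gflow w (fun j : 'I_(size Q) => seglen (segQ j)) fl.
  split.
  - move=> i j; apply: mulr_ge0; first exact: seg0.
    apply: Rintegral_ge0 => t It.
    by have /andP[] := H01 i j t (Iin It).
  - exact: Hrow.
  - move=> j; rewrite /fl -mulr_sumr.
    rewrite -(Rint_sum _ (fun i => tauI i j)).2.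
    rewrite (@eq_Rintegral _ _ _ _ _ (fun=> 1)); last first.
      by move=> t /set_mem It; apply: Hsum; exact: (Iin It).
    rewrite Rintegral_cst; last exact: mI.
    by rewrite -[X in fine X]/(lebesgue_measure (@I01 R)) leb01 /= !mulr1.
apply: le_trans (Wmin fl Hfl) _.
rewrite /plan_cost; apply: ler_sum => i _; apply: ler_sum => j _.
rewrite /fl -mulrA; apply: ler_wpM2l; first exact: seg0.
rewrite -RintegralZr //; last exact: mI.
apply: le_Rintegral.
- exact: mI.
- have h := intM (tauI i j) (@cC R (mindist (pos i) (segQ j))); exact: h.

- have h := intM (tauI i j) (@dist_cont R (pos i) (segQ j)); exact: h.
- move=> t It; apply: ler_wpM2l; last exact: mind.
  by have /andP[] := H01 i j t (Iin It).
Qed.
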